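(* Let $G$ be an upward planar single-source digraph with maximum in- and outdegree at most two. Then in every upward planar embedding of $G$ and for every face $f$, there are at most two edges that are bad with respect to $f$.
   Context: A planar drawing of a digraph is upward if every edge $(u,v)$ is drawn as a curve strictly increasing in $y$ from $u$ to $v$; an upward planar embedding is the equivalence class of upward planar drawings with the same left-to-right orderings of incoming edges and of outgoing edges around each vertex. A single-source digraph has exactly one vertex of indegree zero. If a vertex has two incoming (outgoing) edges, these are its left and right incoming (outgoing) edges according to the embedding. An edge $e=(u,v)$ is bad with respect to face $f$ if either $e$ is the left outgoing edge of $u$ and the left incoming edge of $v$ and $f$ is the face to the right of $e$, or $e$ is the right outgoing edge of $u$ and the right incoming edge of $v$ and $f$ is the face to the left of $e$. *)

(* Defs.v *)
From mathcomp Require Import all_boot all_order all_algebra.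
From mathcomp Require Import all_classical all_reals all_analysis.
Set Implicit Arguments. Unset Strict Implicit. Unset Printing Implicit Defensive.
Import Order.TTheory GRing.Theory Num.Theory.
Import numFieldNormedType.Exports.
Local Open Scope classical_set_scope.
Local Open Scope ring_scope.

(* Points of the plane are
   pairs (x, y) in R * R; "upward" means increasing in the second coordinate. *)

Section Upward.
Variables (R : realType) (V : finType) (g : rel V).

Definition indeg (v : V) : nat := #|[set u | g u v]|.
Definition outdeg (v : V) : nat := #|[set w | g v w]|.

(* A drawing: vertex positions and, for every edge (u,v), a curve
   parameterized on [0,1]. *)
Record drawing := Drawing {
  dpos : V -> R * R ;
  dcurve : V -> V -> R -> R * R }.

Definition unit_itv : set R := [set t | 0 <= t <= 1].
Definition open_unit_itv : set R := [set t | 0 < t < 1].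

Definition upward_planar_drawing (D : drawing) : Prop :=
  injective (dpos D) /\
  (forall u v, g u v ->
     {within unit_itv, continuous (dcurve D u v)} /\
     dcurve D u v 0 = dpos D u /\ dcurve D u v 1 = dpos D v /\
     (forall s t, unit_itv s -> unit_itv t -> s < t ->
        (dcurve D u v s).2 < (dcurve D u v t).2) /\
     (forall t w, open_unit_itv t -> dcurve D u v t <> dpos D w)) /\
  (forall u v u' v', g u v -> g u' v' -> (u, v) <> (u', v') ->
     forall s t, open_unit_itv s -> open_unit_itv t ->
       dcurve D u v s <> dcurve D u' v' t).

Definition drawing_points (D : drawing) : set (R * R) :=
  [set p | (exists w, p = dpos D w) \/
           (exists u v t, g u v /\ unit_itv t /\ p = dcurve D u v t)].

Definition is_face (D : drawing) (f : set (R * R)) : Prop :=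
  exists p, ~ drawing_points D p /\
            f = connected_component (~` drawing_points D) p.

Definition face_right_of (D : drawing) (u v : V) (f : set (R * R)) : Prop :=
  exists t, open_unit_itv t /\ exists2 eps : R, 0 < eps &
    forall d : R, 0 < d < eps ->
      f ((dcurve D u v t).1 + d, (dcurve D u v t).2).
Definition face_left_of (D : drawing) (u v : V) (f : set (R * R)) : Prop :=
  exists t, open_unit_itv t /\ exists2 eps : R, 0 < eps &
    forall d : R, 0 < d < eps ->
      f ((dcurve D u v t).1 - d, (dcurve D u v t).2).

Definition out_left_of (D : drawing) (u v1 v2 : V) : Prop :=
  exists2 delta : R, 0 < delta &
    forall s t, unit_itv s -> unit_itv t ->
      (dpos D u).2 < (dcurve D u v1 s).2 < (dpos D u).2 + delta ->
      (dcurve D u v1 s).2 = (dcurve D u v2 t).2 ->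
      (dcurve D u v1 s).1 < (dcurve D u v2 t).1.

Definition in_left_of (D : drawing) (v w1 w2 : V) : Prop :=
  exists2 delta : R, 0 < delta &
    forall s t, unit_itv s -> unit_itv t ->
      (dpos D v).2 - delta < (dcurve D w1 v s).2 < (dpos D v).2 ->
      (dcurve D w1 v s).2 = (dcurve D w2 v t).2 ->
      (dcurve D w1 v s).1 < (dcurve D w2 v t).1.

Definition left_outgoing (D : drawing) (u v : V) : Prop :=
  g u v /\ exists v', [/\ g u v', v' != v & out_left_of D u v v'].
Definition right_outgoing (D : drawing) (u v : V) : Prop :=
  g u v /\ exists v', [/\ g u v', v' != v & out_left_of D u v' v].
Definition left_incoming (D : drawing) (u v : V) : Prop :=
  g u v /\ exists u', [/\ g u' v, u' != u & in_left_of D v u u'].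
Definition right_incoming (D : drawing) (u v : V) : Prop :=
  g u v /\ exists u', [/\ g u' v, u' != u & in_left_of D v u' u].

Definition bad_edge (D : drawing) (f : set (R * R)) (e : V * V) : Prop :=
  g e.1 e.2 /\
  ((left_outgoing D e.1 e.2 /\ left_incoming D e.1 e.2 /\
    face_right_of D e.1 e.2 f) \/
   (right_outgoing D e.1 e.2 /\ right_incoming D e.1 e.2 /\
    face_left_of D e.1 e.2 f)).

Definition single_source : Prop := exists! s : V, indeg s = 0%N.

End Upward.

(* Main.v *)
Require Import Defs.
From mathcomp Require Import all_boot all_order all_algebra.
From mathcomp Require Import all_classical all_reals all_analysis.
Set Implicit Arguments. Unset Strict Implicit. Unset Printing Implicit Defensive.
Import Order.TTheory GRing.Theory Num.Theory.
Import numFieldNormedType.Exports.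
Local Open Scope classical_set_scope.
Local Open Scope ring_scope.
From mathcomp Require Import lra ring.

Section Topo.
Variable R : realType.

Lemma fst_cont : continuous (fun p : R * R => p.1).
Proof. by move=> [x y]; apply: cvg_fst. Qed.
Lemma snd_cont : continuous (fun p : R * R => p.2).
Proof. by move=> [x y]; apply: cvg_snd. Qed.

Lemma closed_ge_fun (T : topologicalType) (f : T -> R) c :
  continuous f -> closed [set z | c <= f z].
Proof.
move=> fc; rewrite -openC.
have -> : ~` [set z | c <= f z] = f @^-1` [set x | x < c].
  by apply/seteqP; split=> z /=; rewrite real_ltNge ?num_real//; move/negP.
by apply: open_comp; [move=> x _; exact: fc | exact: open_lt].
Qed.

Lemma closed_le_fun (T : topologicalType) (f : T -> R) c :
  continuous f -> closed [set z | f z <= c].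
Proof.
move=> fc; rewrite -openC.
have -> : ~` [set z | f z <= c] = f @^-1` [set x | c < x].
  by apply/seteqP; split=> z /=; rewrite real_ltNge ?num_real//; move/negP.
by apply: open_comp; [move=> x _; exact: fc | exact: open_gt].
Qed.

Lemma open_lt_fun (T : topologicalType) (f : T -> R) c :
  continuous f -> open [set z | f z < c].
Proof.
move=> fc; by apply: (@open_comp _ _ f [set x | x < c]); [move=> x _; exact: fc | exact: open_lt].
Qed.

Lemma open_gt_fun (T : topologicalType) (f : T -> R) c :
  continuous f -> open [set z | c < f z].
Proof.
move=> fc; by apply: (@open_comp _ _ f [set x | c < x]); [move=> x _; exact: fc | exact: open_gt].
Qed.

Lemma closed_graph_cont (K : set (R * R)) (F h : R -> R) y0 :
  compact K -> continuous h -> (forall y, K (F y, h y)) ->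
  (forall z, K z -> z.2 = h y0 -> z.1 = F y0) -> {for y0, continuous F}.
Proof.
move=> cK hc KF Ku; apply/cvgrPdist_lt => e e0.
pose K' := K `&` [set z : R * R | e <= `|F y0 - z.1|].
have cK' : compact K'.
  apply: compact_closedI => //; apply: closed_ge_fun.
  move=> z; apply: (@continuous_comp _ _ _ (fun z : R * R => z.1) (fun x => `|F y0 - x|)); first exact: fst_cont.
  apply: (@continuous_comp _ _ _ (fun x => F y0 - x) (fun x => `|x|)); last exact: norm_continuous.
  by apply: continuousB; [exact: cst_continuous | exact: cvg_id].
pose Y := (fun z : R * R => z.2) @` K'.
have cY : closed Y.
  apply: compact_closed; first exact: Rhausdorff.
  by apply: continuous_compact => //; apply: continuous_subspaceT; exact: snd_cont.
have nY : ~ Y (h y0).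
  move=> [z [Kz ez] zh]; have := Ku z Kz zh; move=> z1.
  by move: ez => /=; rewrite z1 subrr normr0 leNgt e0.
have : \forall y \near y0, (~` Y) (h y).
  have : nbhs (h y0) (~` Y) by apply: open_nbhs_nbhs; split => //; exact: closed_openC.
  exact: hc.
apply: filterS => y nYy; rewrite ltNge; apply/negP => ey.
by apply: nYy; exists (F y, h y).
Qed.

End Topo.

Section Draw.
Variables (R : realType) (V : finType) (g : rel V) (D : drawing R V).
Hypothesis HD : upward_planar_drawing g D.
Local Notation pos := (dpos D).
Local Notation c := (dcurve D).

Lemma unit_itvE : @unit_itv R = `[0, 1]%classic.
Proof. by rewrite set_itvcc. Qed.

Lemma within_comp (A : set R) (f : R -> R * R) (h : R * R -> R) :
  {within A, continuous f} -> continuous h -> {within A, continuous (h \o f)}.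
Proof. by move=> fc hc; apply: within_continuous_comp => // x _; exact: hc. Qed.

Lemma pos_inj : injective pos. Proof. by case: HD. Qed.

Section Edge.
Variables u v : V.
Hypothesis euv : g u v.

Lemma e_cont : {within `[0, 1]%classic, continuous (c u v)}.
Proof. by rewrite -unit_itvE; case: HD => _ [/(_ u v euv) [] ]. Qed.
Lemma e_c0 : c u v 0 = pos u.
Proof. by case: HD => _ [/(_ u v euv) [_ []]]. Qed.
Lemma e_c1 : c u v 1 = pos v.
Proof. by case: HD => _ [/(_ u v euv) [_ [_ []]]]. Qed.
Lemma e_mono s t : 0 <= s <= 1 -> 0 <= t <= 1 -> s < t -> (c u v s).2 < (c u v t).2.
Proof. by case: HD => _ [/(_ u v euv) [_ [_ [_ []]]]] H _ _; apply: H. Qed.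
Lemma e_novert t w : 0 < t < 1 -> c u v t <> pos w.
Proof. by case: HD => _ [/(_ u v euv) [_ [_ [_ []]]]] _ H _; apply: H. Qed.

Lemma e_h : (pos u).2 < (pos v).2.
Proof. by rewrite -e_c0 -e_c1; apply: e_mono; rewrite ?ler01 ?lexx ?ltr01. Qed.

Lemma e_mono_le s t : 0 <= s <= 1 -> 0 <= t <= 1 -> s <= t -> (c u v s).2 <= (c u v t).2.
Proof.
move=> hs ht; rewrite le_eqVlt => /orP [/eqP -> //|st].
exact/ltW/e_mono.
Qed.

Lemma e_hinj s t : 0 <= s <= 1 -> 0 <= t <= 1 -> (c u v s).2 = (c u v t).2 -> s = t.
Proof.
move=> hs ht e; case: (ltgtP s t) => // st.
- by have := e_mono hs ht st; rewrite e ltxx.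
- by have := e_mono ht hs st; rewrite e ltxx.
Qed.

Lemma e_range s : 0 <= s <= 1 -> (pos u).2 <= (c u v s).2 <= (pos v).2.
Proof.
move=> /andP [s0 s1]; rewrite -e_c0 -e_c1.
by rewrite !e_mono_le ?s0 ?s1 ?lexx ?ler01.
Qed.

Lemma e_exists y : (pos u).2 <= y <= (pos v).2 -> exists2 s, 0 <= s <= 1 & (c u v s).2 = y.
Proof.
move=> hy.
have hc : {within `[0, 1]%classic, continuous (fun s => (c u v s).2)}.
  exact: (within_comp e_cont (@snd_cont R)).
have hm : Num.min (c u v 0).2 (c u v 1).2 <= y <= Num.max (c u v 0).2 (c u v 1).2.
  by rewrite /= e_c0 e_c1 min_l ?max_r ?(ltW e_h).
have [s] := @IVT R (fun s => (c u v s).2) 0 1 y ler01 hc hm.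
by rewrite in_itv /= => s01 sy; exists s.
Qed.

End Edge.

Lemma e_disj u v u' v' s t : g u v -> g u' v' -> (u, v) <> (u', v') ->
  0 < s < 1 -> 0 < t < 1 -> c u v s <> c u' v' t.
Proof. by case: HD => _ [_ H] e1 e2 ne hs ht; apply: H. Qed.

End Draw.

Section Paths.
Variables (R : realType) (V : finType) (g : rel V) (D : drawing R V).
Hypothesis HD : upward_planar_drawing g D.
Local Notation pos := (dpos D).
Local Notation c := (dcurve D).

Definition Cv (u v : V) : set (R * R) := c u v @` `[0, 1]%classic.

Fixpoint Kp (x : V) (p : seq V) : set (R * R) :=
  if p is y :: p' then Cv y x `|` Kp y p' else [set pos x].

Fixpoint dpath (x : V) (p : seq V) : Prop :=
  if p is y :: p' then g y x /\ dpath y p' else True.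

Lemma Cv_compact u v : g u v -> compact (Cv u v).
Proof. by move=> e; apply: continuous_compact; [exact: (e_cont HD e) | exact: segment_compact]. Qed.

Lemma Kp_compact x p : dpath x p -> compact (Kp x p).
Proof.
elim: p x => [|y p IH] x /=. 
  by move=> _; exact: compact_set1.
by move=> [e dp]; apply: compactU; [exact: Cv_compact | exact: IH].
Qed.

Lemma Kp_top x p : dpath x p -> Kp x p (pos x).
Proof.
case: p => [|y p] /=; first by [].
move=> [e _]; left; exists 1; last exact: (e_c1 HD e).
by rewrite /= in_itv /= ler01 lexx.
Qed.

Lemma Kp_bot x p : dpath x p -> Kp x p (pos (last x p)).
Proof.
elim: p x => [|y p IH] x /=; first by [].
by move=> [e dp]; right; exact: IH.
Qed.

Lemma Kp_draw x p : dpath x p -> Kp x p `<=` drawing_points g D.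
Proof.
elim: p x => [|y p IH] x /=; first by move=> _ z ->; left; exists x.
move=> [e dp] z [[s s01 <-]|]; last exact: IH.
right; exists y, x, s; split => //; split => //.
Qed.

Lemma Kp_range x p : dpath x p -> forall z, Kp x p z ->
  (pos (last x p)).2 <= z.2 <= (pos x).2.
Proof.
elim: p x => [|y p IH] x /=; first by move=> _ z ->; rewrite lexx.
move=> [e dp] z [[s s01 <-]|Kz].
  have := IH y dp _ (Kp_top dp) => /andP [h1 _].
  have := e_range HD e s01 => /andP [h2 h3].
  by rewrite h3 (le_trans h1 h2).
have := IH y dp _ Kz => /andP [h1 h2].
by rewrite h1 (le_trans h2) // ltW // (e_h HD e).
Qed.

Lemma Kp_ex x p : dpath x p -> forall y, (pos (last x p)).2 <= y <= (pos x).2 ->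
  exists2 z, Kp x p z & z.2 = y.
Proof.
elim: p x => [|y0 p IH] x /=.
  by move=> _ y /andP [h1 h2]; exists (pos x) => //; apply/eqP; rewrite eq_le h1 h2.
move=> [e dp] y /andP [h1 h2].
case: (leP (pos y0).2 y) => hy.
  have [s s01 sy] : exists2 s, 0 <= s <= 1 & (c y0 x s).2 = y.
    by apply: (e_exists HD e); rewrite hy h2.
  by exists (c y0 x s) => //; left; exists s.
have [z Kz zy] : exists2 z, Kp y0 p z & z.2 = y by apply: IH => //; rewrite h1 ltW.
by exists z => //; right.
Qed.

Lemma Kp_uniq x p : dpath x p -> forall z z', Kp x p z -> Kp x p z' ->
  z.2 = z'.2 -> z = z'.
Proof.
elim: p x => [|y p IH] x /=; first by move=> _ z z' -> ->.
move=> [e dp].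
have hcv : forall z z', Cv y x z -> Kp y p z' -> z.2 = z'.2 -> z = z'.
  move=> z z' [s s01 <-] Kz' hz.
  have := Kp_range dp Kz' => /andP [_ h2].
  have s0 : s = 0.
    move: s01 => /=; rewrite in_itv /= => /andP [s0 s1].
    case: (ltP 0 s) => [sp|]; last by move=> sn; apply/eqP; rewrite eq_le sn.
    have := e_mono HD e (s := 0) (t := s); rewrite lexx ler01 s0 s1 sp /= => /(_ isT isT isT).
    by rewrite (e_c0 HD e) hz ltNge h2.
  rewrite s0 (e_c0 HD e) in hz *.
  exact: (IH y dp _ _ (Kp_top dp) Kz' hz).
move=> z z' [Cz|Kz] [Cz'|Kz'] hz.
- move: Cz Cz' hz => [s s01 <-] [s' s01' <-] hz.
  move: s01 s01' => /= ; rewrite !in_itv /= => s01 s01'.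
  by rewrite (e_hinj HD e s01 s01' hz).
- exact: (hcv _ _ Cz Kz' hz).
- exact/esym/(hcv _ _ Cz' Kz (esym hz)).
- exact: (IH y dp _ _ Kz Kz' hz).
Qed.

Lemma Kp_kind x p : dpath x p -> forall z, Kp x p z ->
  (exists w, z = pos w) \/
  exists a b r, [/\ g a b, 0 < r < 1, z = c a b r & (pos b).2 <= (pos x).2].
Proof.
elim: p x => [|y p IH] x /=; first by move=> _ z ->; left; exists x.
move=> [e dp] z [[s s01 <-]|Kz].
  move: s01 => /=; rewrite in_itv /= => /andP [s0 s1].
  case: (ltP 0 s) => [sp|sn]; last first.
    have -> : s = 0 by apply/eqP; rewrite eq_le sn.
    by left; exists y; exact: (e_c0 HD e).
  case: (ltP s 1) => [s1'|sn]; last first.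
    have -> : s = 1 by apply/eqP; rewrite eq_le sn s1.
    by left; exists x; exact: (e_c1 HD e).
  by right; exists y, x, s; split => //; rewrite ?sp ?s1'.
case: (IH y dp z Kz) => [|[a [b [r [eab r01 zr hb]]]]]; first by left.
right; exists a, b, r; split => //.
by rewrite (le_trans hb) // ltW // (e_h HD e).
Qed.

End Paths.

Section Src.
Variables (R : realType) (V : finType) (g : rel V) (D : drawing R V).
Hypothesis HD : upward_planar_drawing g D.
Local Notation pos := (dpos D).
Local Notation c := (dcurve D).

Lemma in_nb x : indeg g x != 0%N -> exists y, g y x.
Proof. by rewrite /indeg -lt0n => /card_gt0P [y]; rewrite inE /= => h; exists y. Qed.

Lemma path_to_source (s : V) : (forall x, indeg g x = 0%N -> x = s) ->
  forall x, exists2 p, dpath g x p & last x p = s.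
Proof.
move=> hs x.
move: {2}#|[pred w | (pos w).2 < (pos x).2]| (leqnn #|[pred w | (pos w).2 < (pos x).2]|) => n.
elim: n x => [|n IH] x hn.
  case: (eqVneq x s) => [->|xs]; first by exists [::].
  have : indeg g x != 0%N by apply/eqP => /hs; apply/eqP.
  move=> /in_nb [y e].
  have : (0 < #|[pred w | ((pos w).2 < (pos x).2)%R]|)%N.
    by apply/card_gt0P; exists y; rewrite inE /= (e_h HD e).
  by rewrite leqn0 in hn; rewrite (eqP hn).
case: (eqVneq x s) => [->|xs]; first by exists [::].
have : indeg g x != 0%N by apply/eqP => /hs; apply/eqP.
move=> /in_nb [y e].
have hlt : (#|[pred w | ((pos w).2 < (pos y).2)%R]| < #|[pred w | ((pos w).2 < (pos x).2)%R]|)%N.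
  apply: proper_card; apply/fintype.properP; split.
    by apply/fintype.subsetP => w; rewrite !inE /= => h; apply: lt_trans h (e_h HD e).
  by exists y; rewrite !inE /= ?ltxx // (e_h HD e).
have [p dp lp] := IH y (leq_trans hlt hn).
by exists (y :: p).
Qed.

Lemma three_in x (u1 u2 u3 : V) : g u1 x -> g u2 x -> g u3 x -> (indeg g x <= 2)%N ->
  u1 = u2 \/ u1 = u3 \/ u2 = u3.
Proof.
move=> h1 h2 h3 hd.
case: (eqVneq u1 u2) => [|n12]; first by left.
case: (eqVneq u1 u3) => [|n13]; first by right; left.
case: (eqVneq u2 u3) => [|n23]; first by right; right.
exfalso; move: hd; apply/negP; rewrite -ltnNge /indeg cardE.
apply: (@uniq_leq_size _ [:: u1; u2; u3]).
  rewrite /= !inE negb_or n12 n13 n23 /=. done.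
by move=> z; rewrite !inE mem_enum => /or3P [] /eqP ->; rewrite inE /=.
Qed.

End Src.

Section Barrier.
Variable R : realType.

Definition clamp (a b y : R) : R := if y < a then a else if b < y then b else y.

Lemma clamp_id a b y : a <= y <= b -> clamp a b y = y.
Proof. by move=> /andP [h1 h2]; rewrite /clamp ltNge h1 /= ltNge h2. Qed.

Lemma clamp_range a b y : a <= b -> a <= clamp a b y <= b.
Proof.
move=> ab; rewrite /clamp; case: ltP => h1; first by rewrite lexx ab.
by case: ltP => h2; rewrite ?lexx ?ab ?h1 // ltW.
Qed.

Lemma clamp_lip a b y y' : a <= b -> `|clamp a b y - clamp a b y'| <= `|y - y'|.
Proof.
move=> ab; rewrite /clamp.
have n1 := ler_norm (y - y').
have n2 : - (y - y') <= `|y - y'| by rewrite -normrN ler_norm.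
move: n1 n2; set d := `|y - y'| => n1 n2.
case: (ltP y a) => h1; case: (ltP y' a) => h2; try case: (ltP b y) => h3; try case: (ltP b y') => h4;
  rewrite ?subrr ?normr0 ?normr_ge0 //;
  rewrite !ler_norml; apply/andP; split; lra.
Qed.

Lemma lip_cont (h : R -> R) : (forall y y', `|h y - h y'| <= `|y - y'|) -> continuous h.
Proof.
move=> hl y0; apply/cvgrPdist_lt => e e0.
apply/nbhs_ballP; exists e => // y; rewrite /ball /= => hy.
by apply: le_lt_trans (hl _ _) hy.
Qed.

Lemma clamp_cont a b : a <= b -> continuous (clamp a b).
Proof. by move=> ab; apply: lip_cont => y y'; exact: clamp_lip. Qed.

Definition barrier (K : set (R * R)) (a b : R) : Prop :=
  [/\ compact K, a <= b, (forall z, K z -> a <= z.2 <= b),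
      (forall y, a <= y <= b -> exists2 z, K z & z.2 = y) &
      (forall z z', K z -> K z' -> z.2 = z'.2 -> z = z')].

Definition bar (K : set (R * R)) (a b y : R) : R :=
  (xget (0, 0) [set z | K z /\ z.2 = clamp a b y]).1.

Section B.
Variables (K : set (R * R)) (a b : R).
Hypothesis HK : barrier K a b.

Lemma bar_in y : K (bar K a b y, clamp a b y).
Proof.
case: HK => _ ab _ ex _.
have [z Kz zy] := ex _ (clamp_range y ab).
have := @xgetPex _ (0, 0) [set z | K z /\ z.2 = clamp a b y] (ex_intro _ z (conj Kz zy)).
rewrite /bar; move: (xget _ _) => w [Kw <-]; by rewrite -surjective_pairing.
Qed.

Lemma bar_eq z : K z -> bar K a b z.2 = z.1.
Proof.
move=> Kz; case: HK => _ ab rg _ un.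
have := bar_in z.2; rewrite clamp_id ?rg // => Kb.
by rewrite -(un _ _ Kb Kz erefl).
Qed.

Lemma bar_cont : continuous (bar K a b).
Proof.
case: HK => cK ab rg _ un => y0.
apply: (@closed_graph_cont R K (bar K a b) (clamp a b) y0 cK (clamp_cont ab) bar_in).
move=> z Kz zh; have := bar_in y0 => Kb.
by rewrite (un _ _ Kz Kb zh).
Qed.

End B.
End Barrier.

Section Region.
Variable R : realType.
Variables (K1 K2 : set (R * R)) (a b : R) (zb zt : R * R).
Hypotheses (H1 : barrier K1 a b) (H2 : barrier K2 a b).
Hypotheses (zb1 : K1 zb) (zb2 : K2 zb) (zba : zb.2 = a).
Hypotheses (zt1 : K1 zt) (zt2 : K2 zt) (ztb : zt.2 = b).

Local Notation A := (bar K1 a b).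
Local Notation B := (bar K2 a b).
Definition Psi (p : R * R) := (p.1 - A p.2) * (p.1 - B p.2).
Definition Reg := [set p : R * R | a < p.2] `&` [set p | p.2 < b] `&` [set p | Psi p < 0].
Definition Clo := [set p : R * R | a <= p.2] `&` [set p | p.2 <= b] `&` [set p | Psi p <= 0].

Lemma bar_comp_cont (K : set (R * R)) : barrier K a b ->
  continuous (fun p : R * R => p.1 - bar K a b p.2).
Proof.
move=> HK p; apply: continuousB; first exact: fst_cont.
apply: (@continuous_comp _ _ _ (fun p : R * R => p.2) (bar K a b)); first exact: snd_cont.
exact: bar_cont.
Qed.

Lemma Psi_cont : continuous Psi.
Proof.
move=> p; apply: (@continuousM _ _ (fun p : R * R => p.1 - A p.2) (fun p : R * R => p.1 - B p.2)).
  exact: bar_comp_cont.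
exact: bar_comp_cont.
Qed.

Lemma Reg_open : open Reg.
Proof.
apply: openI; first apply: openI.
- by apply: open_gt_fun; exact: snd_cont.
- by apply: open_lt_fun; exact: snd_cont.
- by apply: open_lt_fun; exact: Psi_cont.
Qed.

Lemma Clo_closed : closed Clo.
Proof.
apply: closedI; first apply: closedI.
- by apply: closed_ge_fun; exact: snd_cont.
- by apply: closed_le_fun; exact: snd_cont.
- by apply: closed_le_fun; exact: Psi_cont.
Qed.

Lemma Reg_Clo : closure Reg `<=` Clo.
Proof.
rewrite [X in _ `<=` X](closure_id _).1; last exact: Clo_closed.
apply: closureS => p [[h1 h2] h3]; split; [split|] => /=; apply: ltW => //.
Qed.

Lemma A_a : A a = zb.1.
Proof. by have := bar_eq H1 zb1; rewrite zba. Qed.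
Lemma B_a : B a = zb.1.
Proof. by have := bar_eq H2 zb2; rewrite zba. Qed.
Lemma A_b : A b = zt.1.
Proof. by have := bar_eq H1 zt1; rewrite ztb. Qed.
Lemma B_b : B b = zt.1.
Proof. by have := bar_eq H2 zt2; rewrite ztb. Qed.

Lemma sq_le0 (x : R) : x * x <= 0 -> x = 0.
Proof. move=> h; apply/eqP; rewrite -sqrf_eq0 expr2; apply/eqP/le_anti; rewrite h /= -expr2 sqr_ge0 //. Qed.

Lemma Clo_psi0 p : Clo p -> ~ Reg p -> Psi p = 0.
Proof.
move=> [[/= h1 h2] h3] nR.
case: (ltP a p.2) => a2; last first.
  have e : p.2 = a by apply/eqP; rewrite eq_le a2 h1.
  move: h3; rewrite /Psi e A_a B_a => /sq_le0 ->; by rewrite mul0r.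
case: (ltP p.2 b) => b2; last first.
  have e : p.2 = b by apply/eqP; rewrite eq_le b2 h2.
  move: h3; rewrite /Psi e A_b B_b => /sq_le0 ->; by rewrite mul0r.
case: (ltP (Psi p) 0) => hp; first by exfalso; apply: nR; split; [split|].
by apply/eqP; rewrite eq_le h3 hp.
Qed.

Lemma Clo_bd p : Clo p -> ~ Reg p -> K1 p \/ K2 p.
Proof.
move=> Cp nR; have := Clo_psi0 Cp nR; rewrite /Psi => /eqP; rewrite mulf_eq0.
have [[h1 h2] _] := Cp.
have hc : clamp a b p.2 = p.2 by rewrite clamp_id // h1 h2.
move=> /orP []; rewrite subr_eq0 => /eqP e.
  by left; have := bar_in H1 p.2; rewrite hc -e -surjective_pairing.
by right; have := bar_in H2 p.2; rewrite hc -e -surjective_pairing.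
Qed.

Lemma Clo_top p : Clo p -> p.2 <= b /\ (p.2 = b -> p = zt).
Proof.
move=> [[h1 h2] h3]; split => // e.
move: h3 => /=; rewrite /Psi e A_b B_b => /sq_le0 /eqP; rewrite subr_eq0 => /eqP e1.
by rewrite [p]surjective_pairing [zt]surjective_pairing e e1 ztb.
Qed.

Lemma conn_sub (F Dr : set (R * R)) : connected F -> F `<=` ~` Dr ->
  K1 `<=` Dr -> K2 `<=` Dr -> (F `&` Reg) !=set0 -> F `<=` Reg.
Proof.
move=> cF FD K1D K2D ne.
have e : F `&` Reg = F.
  apply: cF => //; first by exists Reg => //; exact: Reg_open.
  exists (closure Reg); first exact: closed_closure.
  apply/seteqP; split => p [Fp Rp]; split => //; first exact: subset_closure.
  case: (pselect (Reg p)) => // nR.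
  have Cp := Reg_Clo Rp.
  by case: (Clo_bd Cp nR) => /[dup] ?; [move/K1D|move/K2D] => /(FD p Fp).
by move=> p Fp; rewrite -e in Fp; case: Fp.
Qed.

End Region.

Section Sep.
Variable R : realType.

Lemma fstc (T U : topologicalType) : continuous (fun p : T * U => p.1).
Proof. by move=> [x y]; apply: cvg_fst. Qed.
Lemma sndc (T U : topologicalType) : continuous (fun p : T * U => p.2).
Proof. by move=> [x y]; apply: cvg_snd. Qed.

Lemma sep_horiz (K D' : set (R * R)) : compact K -> compact D' ->
  (forall k, K k -> ~ D' k) ->
  exists2 d0 : R, 0 < d0 & forall k z, K k -> D' z -> k.2 = z.2 -> d0 <= `|z.1 - k.1|.
Proof.
move=> cK cD disj.
pose h := fun kz : (R * R) * (R * R) => kz.1.2 - kz.2.2.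
have hc : continuous h.
  move=> kz; rewrite /h. apply: (@continuousB _ _ _ (fun kz : (R * R) * (R * R) => kz.1.2) (fun kz : (R * R) * (R * R) => kz.2.2)).
    exact: (@continuous_comp _ _ _ (fun kz : (R * R) * (R * R) => kz.1) (fun p : R * R => p.2) _ (@fstc _ _ _) (@sndc _ _ _)).
  exact: (@continuous_comp _ _ _ (fun kz : (R * R) * (R * R) => kz.2) (fun p : R * R => p.2) _ (@sndc _ _ _) (@sndc _ _ _)).
pose W := (K `*` D') `&` ([set kz | h kz <= 0] `&` [set kz | 0 <= h kz]).
have cW : compact W.
  apply: compact_closedI; first exact: compact_setX.
  by apply: closedI; [exact: closed_le_fun | exact: closed_ge_fun].
pose m := fun kz : (R * R) * (R * R) => kz.2.1 - kz.1.1.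
have mc : continuous m.
  move=> kz; rewrite /m; apply: (@continuousB _ _ _ (fun kz : (R * R) * (R * R) => kz.2.1) (fun kz : (R * R) * (R * R) => kz.1.1)).
    exact: (@continuous_comp _ _ _ (fun kz : (R * R) * (R * R) => kz.2) (fun p : R * R => p.1) _ (@sndc _ _ _) (@fstc _ _ _)).
  exact: (@continuous_comp _ _ _ (fun kz : (R * R) * (R * R) => kz.1) (fun p : R * R => p.1) _ (@fstc _ _ _) (@fstc _ _ _)).
have cI : closed (m @` W).
  apply: compact_closed; first exact: Rhausdorff.
  by apply: continuous_compact => //; apply: continuous_subspaceT.
have n0 : ~ (m @` W) 0.
  move=> [[k z] [[/= Kk Dz] [/= h1 h2]] m0].
  have e2 : k.2 = z.2 by apply/eqP; rewrite -subr_eq0 eq_le h1 h2.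
  have e1 : k.1 = z.1 by apply/eqP; rewrite eq_sym -subr_eq0; apply/eqP; exact: m0.
  by apply: (disj k Kk); rewrite [k]surjective_pairing e1 e2 -surjective_pairing.
have : nbhs (0 : R) (~` (m @` W)).
  by apply: open_nbhs_nbhs; split => //; exact: closed_openC.
move=> /nbhs_ballP [d0 d0p hb]; exists d0 => // k z Kk Dz e.
rewrite leNgt; apply/negP => lt.
apply: (hb (z.1 - k.1)).
  by rewrite /ball /= sub0r normrN.
exists (k, z) => //; split => //=; rewrite /h e subrr lexx //.
Qed.

Lemma bigU_mem (I : eqType) (F : I -> set (R * R)) (s : seq I) (P : pred I) z :
  (\big[setU/set0]_(i <- s | P i) F i) z <-> exists i, [/\ i \in s, P i & F i z].
Proof.
elim: s => [|i s IH]; first by rewrite big_nil; split => // -[i []].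
rewrite big_cons; case: ifP => Pi.
  split.
    by move=> [Fz|/IH [j [js Pj Fj]]]; [exists i; rewrite inE eqxx | exists j; rewrite inE js orbT].
  move=> [j [+ Pj Fj]]; rewrite inE => /orP [/eqP ej|js]; first by left; rewrite -ej.
  by right; apply/IH; exists j.
split; first by move=> /IH [j [js Pj Fj]]; exists j; rewrite inE js orbT.
move=> [j [+ Pj Fj]]; rewrite inE => /orP [/eqP ej|js]; first by rewrite ej Pi in Pj.
by apply/IH; exists j.
Qed.

End Sep.

Section Strip.
Variables (R : realType) (V : finType) (g : rel V) (D : drawing R V).
Hypothesis HD : upward_planar_drawing g D.
Local Notation pos := (dpos D).
Local Notation c := (dcurve D).
Local Notation Dr := (drawing_points g D).

Definition Dother (u v : V) : set (R * R) :=
  (\big[setU/set0]_(w <- enum V) [set pos w]) `|`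
  (\big[setU/set0]_(e <- enum {: V * V} | g e.1 e.2 && (e != (u, v))) Cv D e.1 e.2).

Lemma Dother_compact u v : compact (Dother u v).
Proof.
apply: compactU; apply: bigsetU_compact => i.
  by move=> _; exact: compact_set1.
by move=> /andP [e _]; exact: (Cv_compact HD e).
Qed.

Lemma Dother_vert u v w : Dother u v (pos w).
Proof. by left; apply/bigU_mem; exists w; split => //; rewrite mem_enum. Qed.

Lemma Dr_sub u v z : g u v -> Dr z ->
  Dother u v z \/ exists2 r, 0 < r < 1 & z = c u v r.
Proof.
move=> e; rewrite /drawing_points /= => -[[w ->]|[a [b [r [eab [r01 ->]]]]]].
  by left; exact: Dother_vert.
case: (eqVneq (a, b) (u, v)) => [[ea eb]|ne].
  rewrite ea eb in eab *.
  move: r01 => /andP [r0 r1].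
  case: (ltP 0 r) => [rp|rn]; last first.
    have -> : r = 0 by apply/eqP; rewrite eq_le rn r0.
    by left; rewrite (e_c0 HD eab); exact: Dother_vert.
  case: (ltP r 1) => [r1'|rn]; last first.
    have -> : r = 1 by apply/eqP; rewrite eq_le rn r1.
    by left; rewrite (e_c1 HD eab); exact: Dother_vert.
  by right; exists r => //; rewrite rp r1'.
left; right; apply/bigU_mem; exists (a, b); split => //=.
- by rewrite mem_enum.
- by rewrite eab ne.
- by exists r => //=; rewrite in_itv.
Qed.

Lemma Dother_avoid u v s : g u v -> 0 < s < 1 -> ~ Dother u v (c u v s).
Proof.
move=> e s01 [/bigU_mem [w [_ _ /= hw]]|/bigU_mem [[a b] [_ /andP [/= eab ne] [r r01 hr]]]].
  exact: (e_novert HD e s01 hw).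
move: r01 => /=; rewrite in_itv /= => /andP [r0 r1].
case: (ltP 0 r) => [rp|rn]; last first.
  have r00 : r = 0 by apply/eqP; rewrite eq_le rn r0.
  by apply: (e_novert HD e s01 (w := a)); rewrite -hr r00 (e_c0 HD eab).
case: (ltP r 1) => [r1'|rn]; last first.
  have r11 : r = 1 by apply/eqP; rewrite eq_le rn r1.
  by apply: (e_novert HD e s01 (w := b)); rewrite -hr r11 (e_c1 HD eab).
apply: (e_disj HD eab e _ _ s01 hr) => //; last by rewrite rp r1'.
by move=> h; move: ne; rewrite h eqxx.
Qed.

Lemma shift_cont (k : R) : continuous (fun z : R * R => (z.1 + k, z.2)).
Proof.
move=> z; apply: (@cvg_pair _ _ _ (nbhs z) (nbhs (z.1 + k)) (nbhs z.2)).
  apply: (@continuousD _ _ _ (fun z : R * R => z.1) (fun _ => k)); first exact: fst_cont.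
  exact: cst_continuous.
exact: snd_cont.
Qed.

Lemma sig_abs (sg d : R) : (sg = 1 \/ sg = -1) -> `|sg * d| = `|d|.
Proof. by case=> ->; rewrite ?mul1r ?mulN1r ?normrN. Qed.

Lemma strip_pt (u v : V) (f : set (R * R)) p0 (sg t eps t1 : R) :
  g u v -> f = connected_component (~` Dr) p0 ->
  (sg = 1 \/ sg = -1) -> 0 < t -> t <= t1 -> t1 < 1 -> 0 < eps ->
  (forall d, 0 < d < eps -> f ((c u v t).1 + sg * d, (c u v t).2)) ->
  exists2 d0, 0 < d0 & forall d, 0 < d < d0 -> f ((c u v t1).1 + sg * d, (c u v t1).2).
Proof.
move=> e hf hsg t0 tt1 t11 eps0 hq.
have sub01 : `[t, t1]%classic `<=` `[0, 1]%classic.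
  move=> s /=; rewrite !in_itv /= => /andP [h1 h2].
  by rewrite (le_trans (ltW t0) h1) (le_trans h2 (ltW t11)).
have ccont : {within `[t, t1]%classic, continuous (c u v)}.
  exact: (continuous_subspaceW sub01 (e_cont HD e)).
have in01 : forall s, `[t, t1]%classic s -> 0 < s < 1.
  move=> s /=; rewrite in_itv /= => /andP [h1 h2].
  by rewrite (lt_le_trans t0 h1) (le_lt_trans h2 t11).
pose K := c u v @` `[t, t1]%classic.
have cK : compact K by apply: continuous_compact => //; exact: segment_compact.
have disj : forall k, K k -> ~ Dother u v k.
  by move=> k [s hs <-]; apply: Dother_avoid => //; exact: in01.
have cD : compact (Dother u v) by exact: Dother_compact.
have [d0 d0p hd0] := sep_horiz cK cD disj.
exists (Num.min d0 eps); first by rewrite lt_min d0p eps0.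
move=> d /andP [dp]; rewrite lt_min => /andP [dd0 deps].
pose P := fun s => ((c u v s).1 + sg * d, (c u v s).2).
have Pc : {within `[t, t1]%classic, continuous P}.
  have -> : P = (fun z : R * R => (z.1 + sg * d, z.2)) \o c u v by [].
  by apply: within_continuous_comp => // x _; exact: shift_cont.
pose I := P @` `[t, t1]%classic.
have cI : connected I.
  by apply: connected_continuous_connected => //; exact: segment_connected.
have IA : I `<=` ~` Dr.
  move=> z [s hs <-] hD.
  case: (Dr_sub e hD) => [hO|[r r01 hr]].
    have := hd0 (c u v s) (P s) (ex_intro2 _ _ s hs erefl) hO erefl.
    by rewrite /P /= addrAC subrr add0r sig_abs // ger0_norm ?(ltW dp) // leNgt dd0.
  have hs01 := in01 s hs.
  have rs : r = s.
    apply: (e_hinj HD e); first by move: r01 => /andP [? ?]; rewrite !ltW.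
      by move: hs01 => /andP [? ?]; rewrite !ltW.
    by rewrite -hr.
  move: hr; rewrite rs /P => /(congr1 (fun z : R * R => z.1)) /= /eqP.
  rewrite -subr_eq0 addrAC subrr add0r mulf_eq0 => /orP [].
    by case: hsg => ->; rewrite ?oppr_eq0 oner_eq0.
  by rewrite gt_eqF.
have tI : `[t, t1]%classic t by rewrite /= in_itv /= lexx tt1.
have t1I : `[t, t1]%classic t1 by rewrite /= in_itv /= lexx tt1.
have fq : f (P t) by apply: hq; rewrite dp deps.
have : I `<=` connected_component (~` Dr) (P t).
  apply: connected_component_max => //; exact: (ex_intro2 _ _ t tI erefl).
rewrite -(same_connected_component (A := ~` Dr) (x := p0) (y := P t)); last by rewrite -hf.
by rewrite -hf => /(_ (P t1)); apply; exists t1.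
Qed.

Lemma strip_closure (u v : V) (f : set (R * R)) p0 (sg t eps : R) :
  g u v -> f = connected_component (~` Dr) p0 ->
  (sg = 1 \/ sg = -1) -> 0 < t < 1 -> 0 < eps ->
  (forall d, 0 < d < eps -> f ((c u v t).1 + sg * d, (c u v t).2)) ->
  closure f (pos v).
Proof.
move=> e hf hsg /andP [t0 t1] eps0 hq B /nbhs_ballP [ep ep0 hB].
have h1 : `[0, 1]%classic (1 : R) by rewrite /= in_itv /= ler01 lexx.
have hc := (@subspace_continuousP R (`[0, 1]%classic : set R) _ (c u v)).1 (e_cont HD e) 1 h1.
rewrite (e_c1 HD e) in hc.
have ep2 : 0 < ep / 2 by rewrite divr_gt0.
have := hc _ (nbhsx_ballx _ _ ep2); rewrite /within /= => /nbhs_ballP [dl dl0 hdl].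
pose r := 1 - Num.min dl (1 - t) / 2.
have m0 : 0 < Num.min dl (1 - t) by rewrite lt_min dl0 subr_gt0 t1.
have mt : Num.min dl (1 - t) <= 1 - t by rewrite ge_min lexx orbT.
have md : Num.min dl (1 - t) <= dl by rewrite ge_min lexx.
have tr : t <= r by rewrite /r; lra.
have r1 : r < 1 by rewrite /r; lra.
have hr : ball (pos v) (ep / 2) (c u v r).
  apply: (hdl r); last by rewrite /= in_itv /=; apply/andP; split; lra.
  rewrite /ball /= /r; rewrite opprB addrC subrK ger0_norm; lra.
have [d0 d0p hd0] := strip_pt e hf hsg t0 tr r1 eps0 hq.
pose d := Num.min d0 (ep / 2) / 2.
have m1 : 0 < Num.min d0 (ep / 2) by rewrite lt_min d0p ep2.
have m2 : Num.min d0 (ep / 2) <= d0 by rewrite ge_min lexx.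
have m3 : Num.min d0 (ep / 2) <= ep / 2 by rewrite ge_min lexx orbT.
have fq : f ((c u v r).1 + sg * d, (c u v r).2) by apply: hd0; rewrite /d; apply/andP; split; lra.
exists ((c u v r).1 + sg * d, (c u v r).2); split => //.
apply: hB; move: hr; rewrite /ball /= => -[hx hy]; split; rewrite /ball /=.
  move: hx; rewrite /ball /= => hx.
  rewrite opprD addrA.
  apply: (le_lt_trans (ler_normB _ _)); have hd : `|d| = d by rewrite ger0_norm // /d; lra.
  rewrite sig_abs // hd.
  by rewrite /d; lra.
by move: hy; rewrite /ball /=; lra.
Qed.

End Strip.

Section Key.
Variables (R : realType) (V : finType) (g : rel V) (D : drawing R V).
Hypothesis HD : upward_planar_drawing g D.
Local Notation pos := (dpos D).
Local Notation c := (dcurve D).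
Local Notation Dr := (drawing_points g D).
Variable s : V.
Hypothesis hs : forall x, indeg g x = 0%N -> x = s.

Lemma in01 (r : R) : (`[0, 1]%classic : set R) r -> 0 <= r <= 1.
Proof. by rewrite /= in_itv. Qed.

Lemma key (u v u2 : V) (f : set (R * R)) p0 (sg t eps : R) :
  g u v -> g u2 v -> u2 != u -> (sg = 1 \/ sg = -1) ->
  (exists2 dl : R, 0 < dl & forall s1 t1, 0 <= s1 <= 1 -> 0 <= t1 <= 1 ->
     (pos v).2 - dl < (c u v s1).2 < (pos v).2 -> (c u v s1).2 = (c u2 v t1).2 ->
     0 < sg * ((c u2 v t1).1 - (c u v s1).1)) ->
  f = connected_component (~` Dr) p0 ->
  0 < t < 1 -> 0 < eps -> (forall d, 0 < d < eps -> f ((c u v t).1 + sg * d, (c u v t).2)) ->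
  forall z, closure f z -> z.2 <= (pos v).2 /\ (z.2 = (pos v).2 -> z = pos v).
Proof.
move=> e e2 nu hsg [dl dl0 hor] hf ht eps0 hq.
have [p1 dp1 l1] := path_to_source HD hs u.
have [p2 dp2 l2] := path_to_source HD hs u2.
have d1 : dpath g v (u :: p1) by split.
have d2 : dpath g v (u2 :: p2) by split.
have lst1 : last v (u :: p1) = s by [].
have lst2 : last v (u2 :: p2) = s by [].
pose K1 := Kp D v (u :: p1).
pose K2 := Kp D v (u2 :: p2).
pose al := (pos s).2.
pose be := (pos v).2.
have hab : al <= be.
  by have := Kp_range HD d1 (Kp_top HD d1); rewrite lst1 => /andP [].
have B1 : barrier K1 al be.
  split => //; first exact: (Kp_compact HD d1).
  - by move=> z Kz; have := Kp_range HD d1 Kz; rewrite lst1.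
  - by move=> y hy; apply: (Kp_ex HD d1); rewrite lst1.
  - exact: (Kp_uniq HD d1).
have B2 : barrier K2 al be.
  split => //; first exact: (Kp_compact HD d2).
  - by move=> z Kz; have := Kp_range HD d2 Kz; rewrite lst2.
  - by move=> y hy; apply: (Kp_ex HD d2); rewrite lst2.
  - exact: (Kp_uniq HD d2).
have zb1 : K1 (pos s) by have := Kp_bot D d1; rewrite lst1.
have zb2 : K2 (pos s) by have := Kp_bot D d2; rewrite lst2.
have zt1 : K1 (pos v) := Kp_top HD d1.
have zt2 : K2 (pos v) := Kp_top HD d2.
pose A := bar K1 al be.
pose B := bar K2 al be.
have KA : forall y, al <= y <= be -> K1 (A y, y).
  by move=> y hy; have := bar_in B1 y; rewrite clamp_id.
have KB : forall y, al <= y <= be -> K2 (B y, y).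
  by move=> y hy; have := bar_in B2 y; rewrite clamp_id.
pose y0 := (c u v t).2.
have t01 : 0 <= t <= 1 by move: ht => /andP [? ?]; rewrite !ltW.
have hu0 : (pos u).2 < y0.
  rewrite /y0 -(e_c0 HD e); apply: (e_mono HD e) => //; first by rewrite lexx ler01.
  by case/andP: ht.
have hy0b : y0 < be.
  rewrite /y0 /be -(e_c1 HD e); apply: (e_mono HD e) => //; first by rewrite lexx ler01.
  by case/andP: ht.
have halu : al <= (pos u).2.
  by have := Kp_range HD dp1 (Kp_top HD dp1); rewrite l1 => /andP [].
have haly0 : al < y0 by apply: le_lt_trans halu hu0.
have K1t : K1 (c u v t) by left; exists t => //=; rewrite in_itv.
have Ay0 : A y0 = (c u v t).1 := bar_eq B1 K1t.
have u2b : (pos u2).2 < be := e_h HD e2.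
have K1up : forall z, K1 z -> (pos u).2 < z.2 -> exists2 r, 0 <= r <= 1 & z = c u v r.
  move=> z [[r r01 <-]|Kz] hz; first by exists r => //; exact: in01.
  have := Kp_range HD dp1 Kz => /andP [_ h].
  by rewrite ltNge h in hz.
have K2up : forall z, K2 z -> (pos u2).2 < z.2 -> exists2 r, 0 <= r <= 1 & z = c u2 v r.
  move=> z [[r r01 <-]|Kz] hz; first by exists r => //; exact: in01.
  have := Kp_range HD dp2 Kz => /andP [_ h].
  by rewrite ltNge h in hz.
have neq : (u2, v) <> (u, v) by move=> [h]; move: nu; rewrite h eqxx.
have noteq : forall y, y0 <= y < be -> A y <> B y.
  move=> y /andP [h1 h2] eAB.
  have hy : al <= y <= be by rewrite (le_trans (ltW haly0) h1) (ltW h2).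
  have [r r01 zr] := K1up _ (KA y hy) (lt_le_trans hu0 h1).
  have hyr : y = (c u v r).2 by rewrite -zr.
  move: (r01) => /andP [r0 r1].
  have r0' : 0 < r.
    case: (ltP 0 r) => // rn.
    have r00 : r = 0 by apply/eqP; rewrite eq_le rn r0.
    move: hyr; rewrite r00 (e_c0 HD e) => hyr.
    by move: hu0; rewrite -hyr ltNge h1.
  have r1' : r < 1.
    case: (ltP r 1) => // rn.
    have r11 : r = 1 by apply/eqP; rewrite eq_le rn r1.
    move: hyr; rewrite r11 (e_c1 HD e) => hyr.
    by move: h2; rewrite hyr /be ltxx.
  have r01' : 0 < r < 1 by rewrite r0' r1'.
  have K2z : K2 (c u v r) by rewrite -zr eAB; exact: KB y hy.
  case: K2z => [[r' r'01 hr']|Kz].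
    move: r'01 => /in01 /andP [r'0 r'1].
    case: (ltP 0 r') => r'p; last first.
      have r00 : r' = 0 by apply/eqP; rewrite eq_le r'p r'0.
      by apply: (e_novert HD e r01' (w := u2)); rewrite -hr' r00 (e_c0 HD e2).
    case: (ltP r' 1) => r'q; last first.
      have r11 : r' = 1 by apply/eqP; rewrite eq_le r'q r'1.
      by apply: (e_novert HD e r01' (w := v)); rewrite -hr' r11 (e_c1 HD e2).
    by apply: (e_disj HD e2 e neq _ r01' hr'); rewrite r'p r'q.
  case: (Kp_kind HD dp2 Kz) => [[w hw]|[a [b [r'' [eab r''01 hz hb]]]]].
    exact: (e_novert HD e r01' hw).
  apply: (e_disj HD e eab _ r01' r''01 hz).
  move=> [_ hbv]; move: hb; rewrite -hbv => hb.
  by move: u2b; rewrite /be ltNge hb.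
pose m := Num.max y0 (Num.max (be - dl) (pos u2).2).
have m1 : y0 <= m by rewrite le_max lexx.
have m2 : be - dl <= m by rewrite le_max le_max lexx orbT.
have m3 : (pos u2).2 <= m by rewrite le_max le_max lexx !orbT.
have m4 : m < be by rewrite gt_max gt_max hy0b u2b /=; lra.
pose y1 := (be + m) / 2.
have hy1 : al <= y1 <= be by apply/andP; split; rewrite /y1; lra.
have [s1 s101 zs1] := K1up _ (KA y1 hy1) (ltac:(rewrite /y1 /=; lra)).
have [t1 t101 zt1'] := K2up _ (KB y1 hy1) (ltac:(rewrite /y1 /=; lra)).
have hs1 : (c u v s1).2 = y1 by rewrite -zs1.
have ht1 : (c u2 v t1).2 = y1 by rewrite -zt1'.
have Gy1 : 0 < sg * (B y1 - A y1).
  have -> : B y1 = (c u2 v t1).1 by rewrite -zt1'.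
  have -> : A y1 = (c u v s1).1 by rewrite -zs1.
  apply: hor => //; last by rewrite hs1 ht1.
  by rewrite hs1 /y1; apply/andP; split; lra.
pose G := fun y => sg * (B y - A y).
have Gc : continuous G.
  move=> y; apply: (@continuousM _ _ (fun _ => sg) (fun y => B y - A y)).
    exact: cst_continuous.
  by apply: (@continuousB _ _ _ B A); exact: bar_cont.
have Gy0 : 0 < G y0.
  case: (ltP 0 (G y0)) => // hle.
  have y01 : y0 <= y1 by rewrite /y1; lra.
  have hmm : Num.min (G y0) (G y1) <= 0 <= Num.max (G y0) (G y1).
    by rewrite ge_min hle /= le_max (ltW Gy1) orbT.
  have Gw : {within `[y0, y1]%classic, continuous G} by apply: continuous_subspaceT.
  have [y hy Gy] := IVT y01 Gw hmm.
  move: hy; rewrite in_itv /= => /andP [hy1' hy2'].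
  move: Gy; rewrite /G => /eqP; rewrite mulf_eq0 => /orP [].
    by case: hsg => ->; rewrite ?oppr_eq0 oner_eq0.
  rewrite subr_eq0 => /eqP hBA.
  have hyb : y0 <= y < be by rewrite hy1' /=; apply: le_lt_trans hy2' _; rewrite /y1; lra.
  by have := noteq y hyb; rewrite hBA.
pose d := Num.min eps (G y0) / 2.
have mm0 : 0 < Num.min eps (G y0) by rewrite lt_min eps0 Gy0.
have mm1 : Num.min eps (G y0) <= eps by rewrite ge_min lexx.
have mm2 : Num.min eps (G y0) <= G y0 by rewrite ge_min lexx orbT.
pose q := ((c u v t).1 + sg * d, y0).
have fq : f q by apply: hq; rewrite /d; apply/andP; split; lra.
have Rq : Reg K1 K2 al be q.
  split; first by split => /=.
  rewrite /= /Psi /= -/A -/B Ay0.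
  have -> : ((c u v t).1 + sg * d - (c u v t).1) * ((c u v t).1 + sg * d - B y0)
      = d * (d - G y0).
    rewrite /G -Ay0; case: hsg => ->; ring.
  rewrite pmulr_rlt0 ?subr_lt0 /d; lra.
have fR : f `<=` Reg K1 K2 al be.
  apply: (conn_sub B1 B2 zb1 zb2 erefl zt1 zt2 erefl (Dr := Dr)).
  - by rewrite hf; exact: component_connected.
  - by rewrite hf; exact: connected_component_sub.
  - exact: (Kp_draw (D := D) d1).
  - exact: (Kp_draw (D := D) d2).
  - by exists q.
move=> z cz.
have := Reg_Clo B1 B2 (closureS fR cz).
exact: (Clo_top B1 B2 zt1 zt2 erefl).
Qed.

End Key.

Section Final.
Variables (R : realType) (V : finType) (g : rel V) (D : drawing R V).
Hypothesis HD : upward_planar_drawing g D.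
Local Notation pos := (dpos D).
Local Notation c := (dcurve D).
Local Notation Dr := (drawing_points g D).
Variable s : V.
Hypothesis hs : forall x, indeg g x = 0%N -> x = s.

Lemma bad_top f p0 e : f = connected_component (~` Dr) p0 -> bad_edge g D f e ->
  g e.1 e.2 /\ closure f (pos e.2) /\
  (forall z, closure f z -> z.2 <= (pos e.2).2 /\ (z.2 = (pos e.2).2 -> z = pos e.2)).
Proof.
case: e => u v hf [/= euv [[_ [[_ [u2 [e2 nu [dl dl0 hin]]]] [t [ht [eps eps0 hq]]]]] |
                           [_ [[_ [u2 [e2 nu [dl dl0 hin]]]] [t [ht [eps eps0 hq]]]]]]].
- have hsg : (1 : R) = 1 \/ (1 : R) = -1 by left.
  have hq' : forall d, 0 < d < eps -> f ((c u v t).1 + 1 * d, (c u v t).2).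
    by move=> d hd; rewrite mul1r; exact: hq.
  split => //; split; first exact: (strip_closure HD euv hf hsg ht eps0 hq').
  apply: (key HD hs euv e2 nu hsg _ hf ht eps0 hq').
  exists dl => // s1 t1 hs1 ht1 hw he.
  by rewrite mul1r subr_gt0; apply: hin.
- have hsg : (-1 : R) = 1 \/ (-1 : R) = -1 by right.
  have hq' : forall d, 0 < d < eps -> f ((c u v t).1 + -1 * d, (c u v t).2).
    by move=> d hd; rewrite mulN1r; exact: hq.
  split => //; split; first exact: (strip_closure HD euv hf hsg ht eps0 hq').
  apply: (key HD hs euv e2 nu hsg _ hf ht eps0 hq').
  exists dl => // s1 t1 hs1 ht1 hw he.
  rewrite mulN1r oppr_gt0 subr_lt0; apply: hin => //; by rewrite -he.
Qed.

End Final.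

Theorem mainTheorem6 (R : realType) (V : finType) (g : rel V) :
  single_source g ->
  (forall v, (indeg g v <= 2)%N /\ (outdeg g v <= 2)%N) ->
  forall D : drawing R V, upward_planar_drawing g D ->
  forall f : set (R * R), is_face g D f ->
  forall e1 e2 e3 : V * V,
    bad_edge g D f e1 -> bad_edge g D f e2 -> bad_edge g D f e3 ->
    e1 = e2 \/ e1 = e3 \/ e2 = e3.
Proof.
move=> [s [hs0 hsu]] hdeg D HD f [p0 [_ hf]] e1 e2 e3 b1 b2 b3.
have hs : forall x, indeg g x = 0%N -> x = s by move=> x hx; exact/esym/hsu.
have [g1 [c1 t1]] := bad_top HD hs hf b1.
have [g2 [c2 t2]] := bad_top HD hs hf b2.
have [g3 [c3 t3]] := bad_top HD hs hf b3.
have same : forall a b : V * V, closure f (dpos D a.2) ->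
    (forall z, closure f z -> z.2 <= (dpos D a.2).2 /\ (z.2 = (dpos D a.2).2 -> z = dpos D a.2)) ->
    closure f (dpos D b.2) ->
    (forall z, closure f z -> z.2 <= (dpos D b.2).2 /\ (z.2 = (dpos D b.2).2 -> z = dpos D b.2)) ->
    b.2 = a.2.
  move=> a b ca ta cb tb; apply: (pos_inj HD).
  have [h1 h1'] := ta _ cb; have [h2 _] := tb _ ca.
  by apply: h1'; apply/eqP; rewrite eq_le h1 h2.
have v2 := same e1 e2 c1 t1 c2 t2.
have v3 := same e1 e3 c1 t1 c3 t3.
rewrite v2 in g2; rewrite v3 in g3.
have [hd _] := hdeg e1.2.
case: (three_in g1 g2 g3 hd) => [h|[h|h]].
- by left; rewrite [e1]surjective_pairing [e2]surjective_pairing h v2.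
- by right; left; rewrite [e1]surjective_pairing [e3]surjective_pairing h v3.
- by right; right; rewrite [e2]surjective_pairing [e3]surjective_pairing h v2 v3.
Qed.
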